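(* Let $n\ge2$, $k\ge2$ and $1\le i\le k-1$. Let $Q$ be the graph with vertex set $\mathbb{Z}_n^i$ in which two distinct words $\boldsymbol\alpha,\boldsymbol\beta\in\mathbb{Z}_n^i$ are adjacent if and only if some vertex of $H_{n,k}$ with prefix $\boldsymbol\alpha$ (first $i$ coordinates equal to $\boldsymbol\alpha$) is adjacent in $H_{n,k}$ to some vertex with prefix $\boldsymbol\beta$. Then $Q$ is equal to (in particular isomorphic to) $H_{n,i}$, i.e., contracting each of the $n^i$ blocks of vertices with a common prefix of length $i$ to a single vertex (and merging multiple edges) yields $H_{n,i}$.
   Context: Let $n\ge 2$ and $k\ge 1$ be integers. $H_{n,k}$ is the simple undirected graph with vertex set $V_{n,k}=\mathbb{Z}_n^k$ (so $|V_{n,k}|=n^k$), whose vertices are written as strings $x_1x_2\ldots x_k$ with $x_j\in\mathbb{Z}_n=\{0,1,\ldots,n-1\}$. Two distinct vertices are adjacent if and only if they are related by one of the following rules. For $i=0$ the prefix $x_1\ldots x_i$ is empty, and ''$0\ldots0$'' denotes a string of zeros completing the word to length $k$. (R1) $x_1\ldots x_{k-1}x_k\sim x_1\ldots x_{k-1}y_k$ whenever $y_k\neq x_k$. (R2) For $0\le i\le k-2$: $x_1\ldots x_i0\ldots0\sim x_1\ldots x_ix_{i+1}\ldots x_k$ whenever $x_j\neq 0$ for all $i+1\le j\le k$. (R3) For $1\le i\le k-1$: $x_1\ldots x_{i-1}x_i0\ldots0\sim x_1\ldots x_{i-1}y_i0\ldots0$ whenever $x_i,y_i\neq0$ and $x_i\ne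 y_i$. In particular, $H_{n,1}$ is the complete graph $K_n$. *)

(* Defs.v *)
From mathcomp Require Import all_boot.
Set Implicit Arguments. Unset Strict Implicit. Unset Printing Implicit Defensive.

(* The rules below are stated on
   the underlying lists of natural numbers (map val), letters indexed from 0. *)

Definition all_zero (s : seq nat) : bool := all (fun a => a == 0) s.
Definition all_nz (s : seq nat) : bool := all (fun a => a != 0) s.

Definition R1 (k : nat) (x y : seq nat) : bool :=
  (take k.-1 x == take k.-1 y) && (x != y).

Definition R2 (k : nat) (x y : seq nat) : bool :=
  [exists i : 'I_k.-1,
     [&& take i x == take i y, all_zero (drop i x) & all_nz (drop i y)]].

(* (R3): x = x_1..x_{i-1} x_i 0..0, y = x_1..x_{i-1} y_i 0..0 with x_i, y_i
   nonzero and distinct, for some 1 <= i <= k-1 (j = i-1 ranges in 0..k-2) *)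
Definition R3 (k : nat) (x y : seq nat) : bool :=
  [exists j : 'I_k.-1,
     [&& take j x == take j y,
         all_zero (drop j.+1 x), all_zero (drop j.+1 y),
         nth 0 x j != 0, nth 0 y j != 0 & nth 0 x j != nth 0 y j]].

Definition Hadj (n k : nat) (x y : k.-tuple 'I_n) : bool :=
  let x' := map val x in let y' := map val y in
  (x != y) && [|| R1 k x' y', R1 k y' x', R2 k x' y', R2 k y' x',
                  R3 k x' y' | R3 k y' x'].

Definition Qadj (n k i : nat) (al be : i.-tuple 'I_n) : bool :=
  (al != be) &&
  [exists x : k.-tuple 'I_n, exists y : k.-tuple 'I_n,
     [&& take i x == al :> seq 'I_n, take i y == be :> seq 'I_n & Hadj x y]].

(* Main.v *)
Require Import Defs.
From mathcomp Require Import all_boot.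
From mathcomp Require Import zify.

Lemma all_drop_take (p : pred nat) m i (s : seq nat) :
  all p (drop m s) -> all p (drop m (take i s)).
Proof.
case: (leqP m i) => hm.
  rewrite -(subnK hm) -take_drop => /allP H.
  by apply/allP => z /mem_take; apply: H.
by move=> _; rewrite drop_oversize // size_take_min geq_min ltnW.
Qed.

Lemma r1_of (i j : nat) (x y : seq nat) : i.-1 <= j -> take j x = take j y ->
  take i x != take i y -> R1 i (take i x) (take i y).
Proof.
move=> hj hxy hne; rewrite /R1 hne andbT.
have hi : i.-1 <= i by apply: leq_pred.
by rewrite !take_takel // -(take_takel _ hj) hxy take_takel.
Qed.

Lemma fwd k i (x y : seq nat) : 1 <= i -> i <= k.-1 -> take i x != take i y ->
  [|| R1 k x y, R2 k x y | R3 k x y] ->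
  [|| R1 i (take i x) (take i y), R2 i (take i x) (take i y)
    | R3 i (take i x) (take i y)].
Proof.
move=> hi hik hne.
case/or3P.
- case/andP => /eqP h _; rewrite (@r1_of i k.-1) //.
  by apply: leq_trans (leq_pred _) hik.
- case/existsP => j /and3P [/eqP hj hz hnz].
  case: (leqP i.-1 j) => hij; first by rewrite (@r1_of _ _ _ _ hij hj hne).
  apply/orP; right; apply/orP; left; apply/existsP; exists (Ordinal hij).
  have hji : j <= i by apply: leq_trans (ltnW hij) (leq_pred _).
  rewrite /= !take_takel // hj eqxx /=; apply/andP; split; exact: all_drop_take.
- case/existsP => j /and3P [/eqP hj hz /and4P [hz2 h1 h2 h3]].
  case: (leqP i.-1 j) => hij; first by rewrite (@r1_of _ _ _ _ hij hj hne).
  apply/orP; right; apply/orP; right; apply/existsP; exists (Ordinal hij).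
  have hji : j < i by apply: leq_trans hij (leq_pred _).
  rewrite /= !take_takel ?(ltnW hji) // hj eqxx !nth_take // h1 h2 h3 /= !andbT.
  apply/andP; split; exact: all_drop_take.
Qed.

Lemma take_cat_le (j : nat) (a s : seq nat) : j <= size a -> take j (a ++ s) = take j a.
Proof.
rewrite take_cat leq_eqVlt => /orP [/eqP ->|-> //].
by rewrite ltnn subnn take0 cats0 take_size.
Qed.

Lemma drop_cat_lt (j : nat) (a s : seq nat) : j < size a -> drop j (a ++ s) = drop j a ++ s.
Proof. by rewrite drop_cat => ->. Qed.

Lemma nth_cat_lt (j : nat) (a s : seq nat) : j < size a -> nth 0 (a ++ s) j = nth 0 a j.
Proof. by rewrite nth_cat => ->. Qed.

Lemma bwd k i (a b : seq nat) : size a = i -> size b = i -> 1 <= i -> i <= k.-1 ->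
  [|| R1 i a b, R2 i a b | R3 i a b] ->
  exists u v, [/\ u <= 1, v <= 1 &
   let x := a ++ nseq (k - i) u in let y := b ++ nseq (k - i) v in
   [|| R1 k x y, R1 k y x, R2 k x y, R2 k y x, R3 k x y | R3 k y x]].
Proof.
move=> ha hb hi hik.
have hm : 0 < k - i by lia.
have nz0 : all (fun a => a == 0) (nseq (k - i) 0) by rewrite /all_zero all_nseq eqxx orbT.
have nz1 : all (fun a => a != 0) (nseq (k - i) 1) by rewrite /all_nz all_nseq orbT.
case/or3P.
- case/andP => /eqP ht hne.
  have hj : i.-1 < k.-1 by lia.
  have hja : i.-1 < size a by lia.
  have hjb : i.-1 < size b by lia.
  have da : drop i.-1 a = [:: nth 0 a i.-1].
    by rewrite (drop_nth 0 hja) prednK // drop_oversize ?ha.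
  have db : drop i.-1 b = [:: nth 0 b i.-1].
    by rewrite (drop_nth 0 hjb) prednK // drop_oversize ?hb.
  have hab : nth 0 a i.-1 != nth 0 b i.-1.
    apply: contra hne => /eqP e; apply/eqP.
    by rewrite -(cat_take_drop i.-1 a) -(cat_take_drop i.-1 b) da db ht e.
  have tx u : take i.-1 (a ++ nseq (k - i) u) = take i.-1 a by rewrite take_cat_le // ltnW.
  have ty v : take i.-1 (b ++ nseq (k - i) v) = take i.-1 b by rewrite take_cat_le // ltnW.
  have dx u : drop i.-1 (a ++ nseq (k - i) u) = nth 0 a i.-1 :: nseq (k - i) u.
    by rewrite drop_cat_lt // da.
  have dy v : drop i.-1 (b ++ nseq (k - i) v) = nth 0 b i.-1 :: nseq (k - i) v.
    by rewrite drop_cat_lt // db.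
  case: (eqVneq (nth 0 a i.-1) 0) => h0a; case: (eqVneq (nth 0 b i.-1) 0) => h0b.
  + by move: hab; rewrite h0a h0b.
  + exists 0, 1; split => //=.
    apply/orP; right; apply/orP; right; apply/orP; left.
    apply/existsP; exists (Ordinal hj) => /=.
    by rewrite tx ty ht eqxx dx dy /all_zero /all_nz /= h0a h0b nz0 nz1.
  + exists 1, 0; split => //=.
    apply/orP; right; apply/orP; right; apply/orP; right; apply/orP; left.
    apply/existsP; exists (Ordinal hj) => /=.
    by rewrite tx ty ht eqxx dx dy /all_zero /all_nz /= h0a h0b nz0 nz1.
  + exists 0, 0; split => //=.
    apply/orP; right; apply/orP; right; apply/orP; right; apply/orP; right; apply/orP; left.
    apply/existsP; exists (Ordinal hj) => /=.
    rewrite tx ty ht eqxx !nth_cat_lt // h0a h0b hab.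
    by rewrite /= prednK // !drop_size_cat // /all_zero nz0.
- case/existsP => j /and3P [/eqP hj hz hnz].
  have hjo := ltn_ord j.
  have hj' : j < k.-1 by lia.
  have hja : j < size a by lia.
  have hjb : j < size b by lia.
  exists 0, 1; split => //=.
  apply/orP; right; apply/orP; right; apply/orP; left.
  apply/existsP; exists (Ordinal hj') => /=.
  rewrite (@take_cat_le _ _ _ (ltnW hja)) (@take_cat_le _ _ _ (ltnW hjb)) hj eqxx !drop_cat_lt //.
  by move: hz hnz; rewrite /all_zero /all_nz !all_cat nz0 nz1 !andbT => -> ->.
- case/existsP => j /and3P [/eqP hj hz /and4P [hz2 h1 h2 h3]].
  have hjo := ltn_ord j.
  have hj' : j < k.-1 by lia.
  have hja : j.+1 < size a by lia.
  have hjb : j.+1 < size b by lia.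
  exists 0, 0; split => //=.
  apply/orP; right; apply/orP; right; apply/orP; right; apply/orP; right; apply/orP; left.
  apply/existsP; exists (Ordinal hj') => /=.
  rewrite (@take_cat_le _ _ _ (ltnW (ltnW hja))) (@take_cat_le _ _ _ (ltnW (ltnW hjb))) hj eqxx !drop_cat_lt //.
  rewrite (@nth_cat_lt _ _ _ (ltnW hja)) (@nth_cat_lt _ _ _ (ltnW hjb)) h1 h2 h3.
  by move: hz hz2; rewrite /all_zero !all_cat nz0 !andbT => -> ->.
Qed.

Theorem mainTheorem3 (n k i : nat) :
  2 <= n -> 2 <= k -> 1 <= i -> i <= k.-1 ->
  forall al be : i.-tuple 'I_n, Qadj k al be = Hadj al be.
Proof.
move=> hn hk hi hik al be.
apply/idP/idP.
- case/andP => hne /existsP [x /existsP [y /and3P [/eqP hx /eqP hy hxy]]].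
  rewrite /Hadj hne /=.
  case/andP: hxy => _.
  have ex : map val al = take i (map val x) by rewrite -map_take hx.
  have ey : map val be = take i (map val y) by rewrite -map_take hy.
  have hne' : take i (map val x) != take i (map val y).
    rewrite -ex -ey; apply: contra hne => /eqP h; apply/eqP.
    by apply: val_inj; apply: (inj_map val_inj).
  have hne'' : take i (map val y) != take i (map val x) by rewrite eq_sym.
  rewrite ex ey => /or4P [h|h|h|/or3P [h|h|h]].
  + by case/or3P: (@fwd k i _ _ hi hik hne' (introT or3P (Or31 _ _ h))) => ->; rewrite ?orbT.
  + by case/or3P: (@fwd k i _ _ hi hik hne'' (introT or3P (Or31 _ _ h))) => ->; rewrite ?orbT.
  + by case/or3P: (@fwd k i _ _ hi hik hne' (introT or3P (Or32 _ _ h))) => ->; rewrite ?orbT.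
  + by case/or3P: (@fwd k i _ _ hi hik hne'' (introT or3P (Or32 _ _ h))) => ->; rewrite ?orbT.
  + by case/or3P: (@fwd k i _ _ hi hik hne' (introT or3P (Or33 _ _ h))) => ->; rewrite ?orbT.
  + by case/or3P: (@fwd k i _ _ hi hik hne'' (introT or3P (Or33 _ _ h))) => ->; rewrite ?orbT.
- case/andP => hne hd.
  have hd' : [|| R1 i (map val al) (map val be), R2 i (map val al) (map val be)
              | R3 i (map val al) (map val be)] \/
             [|| R1 i (map val be) (map val al), R2 i (map val be) (map val al)
              | R3 i (map val be) (map val al)].
    by case/or4P: hd => [->|->|->|/or3P[->|->|->]]; rewrite ?orbT; auto.
  have sa : size (map val al) = i by rewrite size_map size_tuple.
  have sb : size (map val be) = i by rewrite size_map size_tuple.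
  have hsz (t : i.-tuple 'I_n) (c : 'I_n) : size (t ++ nseq (k - i) c) == k.
    by rewrite size_cat size_nseq size_tuple; apply/eqP; lia.
  have mk (u : nat) : u <= 1 -> {c : 'I_n | val c = u}.
    move=> hu; have hun : u < n by lia.
    by exists (Ordinal hun).
  have fin : forall (a b : i.-tuple 'I_n) u v, a != b -> u <= 1 -> v <= 1 ->
     (let x := map val a ++ nseq (k - i) u in let y := map val b ++ nseq (k - i) v in
      [|| R1 k x y, R1 k y x, R2 k x y, R2 k y x, R3 k x y | R3 k y x]) ->
     Qadj k a b || Qadj k b a.
    move=> a b u v hab hu hv /= H.
    case: (mk u hu) => cu hcu; case: (mk v hv) => cv hcv.
    have ex : take i (Tuple (hsz a cu) : seq 'I_n) = a by rewrite /= take_size_cat ?size_tuple.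
    have ey : take i (Tuple (hsz b cv) : seq 'I_n) = b by rewrite /= take_size_cat ?size_tuple.
    apply/orP; left; rewrite /Qadj hab /=.
    apply/existsP; exists (Tuple (hsz a cu)); apply/existsP; exists (Tuple (hsz b cv)).
    rewrite ex ey !eqxx /Hadj /=.
    rewrite !map_cat !map_nseq hcu hcv H andbT.
    apply: contra hab => /eqP h; apply/eqP.
    move/(congr1 (fun t : k.-tuple 'I_n => take i (val t))): h => /=.
    by rewrite ex ey => e; apply: val_inj.
  have QS : Qadj k be al = Qadj k al be.
    rewrite /Qadj eq_sym; congr (_ && _).
    apply/existsP/existsP => [[x /existsP [y /and3P [h1 h2 h3]]]|[x /existsP [y /and3P [h1 h2 h3]]]];
      exists y; apply/existsP; exists x; rewrite h1 h2 /=; move: h3;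
      rewrite /Hadj eq_sym; case: (_ != _) => //=;
      by case/or4P => [->|->|->|/or3P[->|->|->]]; rewrite ?orbT.
  case: hd' => H.
  + case: (@bwd k i _ _ sa sb hi hik H) => u [v [hu hv H']].
    by case/orP: (fin al be u v hne hu hv H'); rewrite ?QS.
  + case: (@bwd k i _ _ sb sa hi hik H) => u [v [hu hv H']].
    by case/orP: (fin be al u v (negbT (introF eqP (fun e => negP hne (introT eqP (esym e))))) hu hv H'); rewrite ?QS.
Qed.
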